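(* Let $(G,s,t)$ be a TTSPG and let $L=(G,l)$ for a length function $l:E\to\mathbb R_{\ge0}$. Then $[L,s,t]$ is either empty or a closed bounded interval of $\mathbb R$ (possibly a single point).
   Context: A graph has a finite vertex set and a finite multiset $E$ of edges, each an unordered pair of distinct vertices. A linkage is $L=(G,l)$ with $l:E\to\mathbb R_{\ge0}$; $C(L)=\{p:V\to\mathbb R^2: |p(u)-p(v)|=l(\{u,v\})\ \forall\{u,v\}\in E\}$ and $M(L)$ is its quotient by orientation preserving isometries of $\mathbb R^2$. $[L,s,t]=\{|p(s)-p(t)|:p\in M(L)\}$. A TTG is $(G,s,t)$ with $s\neq t$ vertices of $G$; series composition $(G_1,s_1,t_1)\circ(G_2,s_2,t_2)=(G_1\cup_{t_2\sim s_1}G_2,s_2,t_1)$; parallel composition $(G_1,s_1,t_1)\|(G_2,s_2,t_2)=(G_1\cup_{s_1\sim s_2,t_1\sim t_2}G_2,s_1,t_1)$. TTSPGs form the smallest class of TTGs containing the single edge $(K_2,s,t)$ and closed under series and parallel composition. *)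

(* Defs.v *)
From Stdlib Require Import Reals List.
Import ListNotations.
Open Scope R_scope.

Inductive vtx (I : Type) : Type :=
| Src : vtx I
| Snk : vtx I
| Inn : I -> vtx I.
Arguments Src {I}. Arguments Snk {I}. Arguments Inn {I} _.

(* Syntax trees of two-terminal series-parallel graphs.
   Ser T1 T2 denotes (G1,s1,t1) o (G2,s2,t2), Par T1 T2 denotes (G1,s1,t1) || (G2,s2,t2). *)
Inductive sp : Type :=
| SPEdge : sp
| SPSer : sp -> sp -> sp
| SPPar : sp -> sp -> sp.

Fixpoint inner (T : sp) : Type :=
  match T with
  | SPEdge => Empty_set
  | SPSer T1 T2 => (inner T1 + inner T2 + unit)%type  (* unit = glued vertex t2 ~ s1 *)
  | SPPar T1 T2 => (inner T1 + inner T2)%type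
  end.

Definition V (T : sp) : Type := vtx (inner T).

Definition ser_left (T1 T2 : sp) (v : V T1) : V (SPSer T1 T2) :=
  match v with
  | Src => Inn (inr tt)      (* s1 is glued to t2 *)
  | Snk => Snk
  | Inn i => Inn (inl (inl i))
  end.
Definition ser_right (T1 T2 : sp) (v : V T2) : V (SPSer T1 T2) :=
  match v with
  | Src => Src               (* s2 is the new source *)
  | Snk => Inn (inr tt)
  | Inn j => Inn (inl (inr j))
  end.
Definition par_left (T1 T2 : sp) (v : V T1) : V (SPPar T1 T2) :=
  match v with Src => Src | Snk => Snk | Inn i => Inn (inl i) end.
Definition par_right (T1 T2 : sp) (v : V T2) : V (SPPar T1 T2) :=
  match v with Src => Src | Snk => Snk | Inn j => Inn (inr j) end.

Definition map_edge {A B : Type} (f : A -> B) (e : A * A) : B * B :=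
  (f (fst e), f (snd e)).

Fixpoint edges (T : sp) : list (V T * V T) :=
  match T return list (V T * V T) with
  | SPEdge => [(Src, Snk)]
  | SPSer T1 T2 => map (map_edge (ser_left T1 T2)) (edges T1)
                   ++ map (map_edge (ser_right T1 T2)) (edges T2)
  | SPPar T1 T2 => map (map_edge (par_left T1 T2)) (edges T1)
                   ++ map (map_edge (par_right T1 T2)) (edges T2)
  end.

Definition dist2 (a b : R * R) : R :=
  sqrt ((fst a - fst b)^2 + (snd a - snd b)^2).

(* The length function l assigns to the i-th edge (of the list edges T) the length l i. *)
Definition realization (T : sp) (l : nat -> R) (p : V T -> R * R) : Prop :=
  forall i u v, nth_error (edges T) i = Some (u, v) -> dist2 (p u) (p v) = l i.

(* [L,s,t] = { |p(s) - p(t)| : p a realization }. *)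
Definition dist_set (T : sp) (l : nat -> R) (d : R) : Prop :=
  exists p : V T -> R * R, realization T l p /\ d = dist2 (p Src) (p Snk).

(* Main.v *)
Require Import Defs.
From Stdlib Require Import Reals List Lra Psatz Rgeom Arith Lia.
Import ListNotations.
Open Scope R_scope.

Lemma dist2_euc a b : dist2 a b = dist_euc (fst a) (snd a) (fst b) (snd b).
Proof. unfold dist2, dist_euc, Rsqr. f_equal. ring. Qed.

Lemma dist2_tri a b c : dist2 a c <= dist2 a b + dist2 b c.
Proof. rewrite !dist2_euc. apply triangle. Qed.

Lemma dist2_sym a b : dist2 a b = dist2 b a.
Proof. unfold dist2. f_equal. ring. Qed.

Lemma dist2_pos a b : 0 <= dist2 a b.
Proof. apply sqrt_pos. Qed.

Lemma sqrt_eq_helper e a : 0 <= a -> e = a^2 -> sqrt e = a.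
Proof. intros H ->. apply sqrt_pow2; auto. Qed.

Definition isom (f : R*R -> R*R) := forall a b, dist2 (f a) (f b) = dist2 a b.

Lemma isom_exists P Q A B : dist2 P Q = dist2 A B ->
  exists f, isom f /\ f P = A /\ f Q = B.
Proof.
  destruct P as [px py], Q as [qx qy], A as [ax ay], B as [bx by0].
  unfold dist2; cbn [fst snd]. intros H.
  set (ux := qx - px). set (uy := qy - py). set (wx := bx - ax). set (wy := by0 - ay).
  assert (Hs : ux^2 + uy^2 = wx^2 + wy^2).
  { replace (ux^2+uy^2) with ((px-qx)^2+(py-qy)^2) by (unfold ux, uy; ring).
    replace (wx^2+wy^2) with ((ax-bx)^2+(ay-by0)^2) by (unfold wx, wy; ring).
    apply sqrt_inj; [|  |exact H]; apply Rplus_le_le_0_compat; apply pow2_ge_0. }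
  destruct (Req_dec (ux^2+uy^2) 0) as [H0|H0].
  - assert (ux = 0 /\ uy = 0 /\ wx = 0 /\ wy = 0) as (E1&E2&E3&E4) by (split; [|split; [|split]]; nra).
    exists (fun z => (fst z - px + ax, snd z - py + ay)). split; [|split].
    + intros [x1 y1] [x2 y2]. unfold dist2; simpl. f_equal. ring.
    + simpl. f_equal; ring.
    + simpl. unfold ux, uy, wx, wy in *. f_equal; lra.
  - set (s := ux^2+uy^2) in *.
    set (cx := (wx*ux + wy*uy)/s). set (cy := (wy*ux - wx*uy)/s).
    assert (Hc : cx^2 + cy^2 = 1).
    { unfold cx, cy.
      replace (((wx * ux + wy * uy) / s) ^ 2 + ((wy * ux - wx * uy) / s) ^ 2)
        with ((wx^2+wy^2)*(ux^2+uy^2)/s^2) by (field; exact H0).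
      rewrite <- Hs. fold s. field. exact H0. }
    exists (fun z => (ax + (cx*(fst z - px) - cy*(snd z - py)), ay + (cy*(fst z - px) + cx*(snd z - py)))).
    split; [|split].
    + intros [x1 y1] [x2 y2]. unfold dist2; simpl. f_equal.
      transitivity ((cx^2+cy^2)*((x1-x2)^2 + (y1-y2)^2)); [ring|]. rewrite Hc; ring.
    + simpl. f_equal; ring.
    + simpl. fold ux uy. f_equal.
      * assert (cx*ux - cy*uy = wx). { unfold cx, cy. field_simplify; [|exact H0]. unfold s. field. exact H0. }
        unfold wx in *. lra.
      * assert (cy*ux + cx*uy = wy). { unfold cx, cy. field_simplify; [|exact H0]. unfold s. field. exact H0. }
        unfold wy in *. lra.
Qed.

Lemma tri_exists d1 d2 d : 0<=d1 -> 0<=d2 -> d1 - d2 <= d -> d2 - d1 <= d -> d <= d1+d2 ->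
  exists X Y Z, dist2 X Y = d2 /\ dist2 Y Z = d1 /\ dist2 X Z = d.
Proof.
  intros h1 h2 h3 h4 h5.
  destruct (Req_dec d 0) as [Hd|Hd].
  - exists (0,0), (d2,0), (0,0). unfold dist2; simpl. split; [|split];
      apply sqrt_eq_helper; try lra; subst; try nra.
  - assert (Hp : 0 < d) by lra.
    set (x := (d^2 + d2^2 - d1^2)/(2*d)).
    assert (Hn : 0 <= d2^2 - x^2).
    { assert (d2^2 - x^2 = (d1-d+d2)*(d1+d-d2)*(d+d2-d1)*(d+d2+d1)/(4*d^2)) as ->
        by (unfold x; field; lra).
      unfold Rdiv; apply Rmult_le_pos; [repeat apply Rmult_le_pos; lra|].
      left; apply Rinv_0_lt_compat; nra. }
    exists (0,0), (x, sqrt (d2^2 - x^2)), (d,0). unfold dist2; cbn [fst snd].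
    split; [|split]; apply sqrt_eq_helper; try lra.
    + replace ((0 - sqrt (d2^2 - x^2))^2) with (sqrt (d2^2 - x^2)^2) by ring.
      rewrite pow2_sqrt; auto. ring.
    + replace ((sqrt (d2^2 - x^2) - 0)^2) with (sqrt (d2^2 - x^2)^2) by ring.
      rewrite pow2_sqrt; auto. unfold x. field. lra.
Qed.

Lemma real_isom T l p f : isom f -> realization T l p -> realization T l (fun v => f (p v)).
Proof. intros Hf Hp i u v H. rewrite Hf. eauto. Qed.

Lemma real_ext T l p q : (forall v, p v = q v) -> realization T l p -> realization T l q.
Proof. intros He Hp i u v H. rewrite <- !He. eauto. Qed.

Lemma dist_set_nonneg T l d : dist_set T l d -> 0 <= d.
Proof. intros [p [_ ->]]. apply dist2_pos. Qed.

Lemma relocate T l d A B : dist_set T l d -> dist2 A B = d ->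
  exists q, realization T l q /\ q Src = A /\ q Snk = B.
Proof.
  intros [p [Hp Hd]] HAB.
  destruct (isom_exists (p Src) (p Snk) A B) as [f [Hf [H1 H2]]]; [congruence|].
  exists (fun v => f (p v)). split; auto. apply real_isom; auto.
Qed.

Lemma nth_app_map {A B C : Type} (f : A -> C) (g : B -> C) (L1 : list (A*A)) (L2 : list (B*B)) i :
  nth_error (map (map_edge f) L1 ++ map (map_edge g) L2) i =
  if Nat.ltb i (length L1) then option_map (map_edge f) (nth_error L1 i)
  else option_map (map_edge g) (nth_error L2 (i - length L1)).
Proof.
  destruct (Nat.ltb_spec i (length L1)).
  - rewrite nth_error_app1 by (rewrite length_map; lia). apply nth_error_map.
  - rewrite nth_error_app2 by (rewrite length_map; lia). rewrite length_map. apply nth_error_map.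
Qed.

Definition shift (T1 : sp) (l : nat -> R) := fun i => l (length (edges T1) + i)%nat.

Lemma real_comb (T1 T2 T : sp) (f : V T1 -> V T) (g : V T2 -> V T) l p :
  edges T = map (map_edge f) (edges T1) ++ map (map_edge g) (edges T2) ->
  realization T l p <-> realization T1 l (fun v => p (f v)) /\ realization T2 (shift T1 l) (fun v => p (g v)).
Proof.
  intros HE. unfold realization. rewrite HE. split.
  - intros H0; split; intros i u v Hi.
    + assert (Hlt : (i < length (edges T1))%nat) by (apply nth_error_Some; congruence).
      apply (H0 i (f u) (f v)). rewrite nth_app_map.
      destruct (Nat.ltb_spec i (length (edges T1))); [|lia]. rewrite Hi. reflexivity.
    + apply (H0 (length (edges T1) + i)%nat (g u) (g v)). rewrite nth_app_map.
      destruct (Nat.ltb_spec (length (edges T1) + i) (length (edges T1))); [lia|].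
      replace (length (edges T1) + i - length (edges T1))%nat with i by lia.
      rewrite Hi. reflexivity.
  - intros [H1 H2] i u v Hi. rewrite nth_app_map in Hi.
    destruct (Nat.ltb_spec i (length (edges T1))).
    + destruct (nth_error (edges T1) i) as [[a b]|] eqn:E; simpl in Hi; inversion Hi; subst.
      apply H1 in E. exact E.
    + destruct (nth_error (edges T2) (i - length (edges T1))) as [[a b]|] eqn:E; simpl in Hi;
        inversion Hi; subst.
      apply H2 in E. unfold shift in E.
      replace (length (edges T1) + (i - length (edges T1)))%nat with i in E by lia. exact E.
Qed.

Definition glue_ser T1 T2 (X Y Z : R*R) (q1 : V T1 -> R*R) (q2 : V T2 -> R*R)
  (v : V (SPSer T1 T2)) : R*R :=
  match v with
  | Src => X | Snk => Z
  | Inn (inl (inl i)) => q1 (Inn i)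
  | Inn (inl (inr j)) => q2 (Inn j)
  | Inn (inr _) => Y
  end.

Lemma ser_char T1 T2 l d :
  dist_set (SPSer T1 T2) l d <->
  exists d1 d2, dist_set T1 l d1 /\ dist_set T2 (shift T1 l) d2 /\
    d1 - d2 <= d /\ d2 - d1 <= d /\ d <= d1 + d2.
Proof.
  split.
  - intros [p [Hr Hd]].
    apply (real_comb T1 T2 (SPSer T1 T2) (ser_left T1 T2) (ser_right T1 T2) l p eq_refl) in Hr.
    destruct Hr as [H1 H2].
    exists (dist2 (p (Inn (inr tt))) (p Snk)), (dist2 (p Src) (p (Inn (inr tt)))).
    split; [exists (fun v => p (ser_left T1 T2 v)); split; [exact H1|reflexivity]|].
    split; [exists (fun v => p (ser_right T1 T2 v)); split; [exact H2|reflexivity]|].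
    subst d.
    pose proof (dist2_tri (p Src) (p (Inn (inr tt))) (p Snk)).
    pose proof (dist2_tri (p (Inn (inr tt))) (p Src) (p Snk)).
    pose proof (dist2_tri (p Src) (p Snk) (p (Inn (inr tt)))).
    rewrite (dist2_sym (p (Inn (inr tt))) (p Src)) in *.
    rewrite (dist2_sym (p Snk) (p (Inn (inr tt)))) in *.
    lra.
  - intros (d1 & d2 & D1 & D2 & h3 & h4 & h5).
    pose proof (dist_set_nonneg _ _ _ D1). pose proof (dist_set_nonneg _ _ _ D2).
    destruct (tri_exists d1 d2 d) as (X & Y & Z & e1 & e2 & e3); auto.
    destruct (relocate _ _ _ Y Z D1 e2) as (q1 & R1 & a1 & b1).
    destruct (relocate _ _ _ X Y D2 e1) as (q2 & R2 & a2 & b2).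
    exists (glue_ser T1 T2 X Y Z q1 q2). split; [|simpl; auto].
    apply (real_comb T1 T2 (SPSer T1 T2) (ser_left T1 T2) (ser_right T1 T2) l _ eq_refl).
    split.
    + apply (real_ext _ _ q1); auto. intros [| |i]; simpl; auto.
    + apply (real_ext _ _ q2); auto. intros [| |i]; simpl; auto.
Qed.

Definition glue_par T1 T2 (q1 : V T1 -> R*R) (q2 : V T2 -> R*R)
  (v : V (SPPar T1 T2)) : R*R :=
  match v with
  | Src => q1 Src | Snk => q1 Snk
  | Inn (inl i) => q1 (Inn i)
  | Inn (inr j) => q2 (Inn j)
  end.

Lemma par_char T1 T2 l d :
  dist_set (SPPar T1 T2) l d <-> dist_set T1 l d /\ dist_set T2 (shift T1 l) d.
Proof.
  split.
  - intros [p [Hr Hd]].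
    apply (real_comb T1 T2 (SPPar T1 T2) (par_left T1 T2) (par_right T1 T2) l p eq_refl) in Hr.
    destruct Hr as [H1 H2].
    split; [exists (fun v => p (par_left T1 T2 v)) | exists (fun v => p (par_right T1 T2 v))];
      split; auto.
  - intros [[q1 [R1 Hd]] D2].
    destruct (relocate _ _ _ (q1 Src) (q1 Snk) D2 (eq_sym Hd)) as (q2 & R2 & a2 & b2).
    exists (glue_par T1 T2 q1 q2). split; [|simpl; auto].
    apply (real_comb T1 T2 (SPPar T1 T2) (par_left T1 T2) (par_right T1 T2) l _ eq_refl).
    split.
    + apply (real_ext _ _ q1); auto. intros [| |i]; simpl; auto.
    + apply (real_ext _ _ q2); auto. intros [| |i]; simpl; auto.
Qed.

Lemma edge_char l d : 0 <= l 0%nat -> dist_set SPEdge l d <-> d = l 0%nat.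
Proof.
  intros H0. split.
  - intros [p [Hr ->]]. apply (Hr 0%nat). reflexivity.
  - intros ->. exists (fun v => match v with Src => (0,0) | _ => (l 0%nat, 0) end).
    split.
    + intros i u v H. destruct i as [|i]; simpl in H.
      * inversion H; subst. unfold dist2; cbn [fst snd]. apply sqrt_eq_helper; auto. ring.
      * destruct i; discriminate.
    + unfold dist2; cbn [fst snd]. symmetry. apply sqrt_eq_helper; auto. ring.
Qed.

Definition Good (D : R -> Prop) := (forall d, ~ D d) \/
  exists a b, 0 <= a <= b /\ forall d, D d <-> a <= d <= b.

Lemma good_par (D D1 D2 : R -> Prop) : Good D1 -> Good D2 ->
  (forall d, D d <-> D1 d /\ D2 d) -> Good D.
Proof.
  intros [E1|(a1&b1&h1&H1)] [E2|(a2&b2&h2&H2)] HD.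
  - left; intros d Hd; apply HD in Hd; firstorder.
  - left; intros d Hd; apply HD in Hd; firstorder.
  - left; intros d Hd; apply HD in Hd; firstorder.
  - set (a := Rmax a1 a2). set (b := Rmin b1 b2).
    assert (a1 <= a /\ a2 <= a /\ (a = a1 \/ a = a2)) as (ha1&ha2&ha3).
    { unfold a, Rmax; destruct (Rle_dec a1 a2); lra. }
    assert (b <= b1 /\ b <= b2 /\ (b = b1 \/ b = b2)) as (hb1&hb2&hb3).
    { unfold b, Rmin; destruct (Rle_dec b1 b2); lra. }
    destruct (Rle_dec a b).
    + right. exists a, b. split; [lra|]. intros d. rewrite HD, H1, H2. lra.
    + left. intros d Hd. apply HD in Hd. rewrite H1, H2 in Hd. lra.
Qed.

Lemma good_ser (D D1 D2 : R -> Prop) : Good D1 -> Good D2 ->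
  (forall d, D d <-> exists d1 d2, D1 d1 /\ D2 d2 /\
    d1 - d2 <= d /\ d2 - d1 <= d /\ d <= d1 + d2) -> Good D.
Proof.
  intros [E1|(a1&b1&h1&H1)] [E2|(a2&b2&h2&H2)] HD.
  - left; intros d Hd; apply HD in Hd; firstorder.
  - left; intros d Hd; apply HD in Hd; firstorder.
  - left; intros d Hd; apply HD in Hd; firstorder.
  - right. set (m := Rmax (Rmax 0 (a1 - b2)) (a2 - b1)).
    assert (0 <= m /\ a1 - b2 <= m /\ a2 - b1 <= m) as (m1&m2&m3).
    { unfold m. pose proof (Rmax_l (Rmax 0 (a1 - b2)) (a2 - b1)).
      pose proof (Rmax_r (Rmax 0 (a1 - b2)) (a2 - b1)).
      pose proof (Rmax_l 0 (a1 - b2)). pose proof (Rmax_r 0 (a1 - b2)). lra. }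
    assert (m4 : m = 0 \/ m = a1 - b2 \/ m = a2 - b1).
    { unfold m, Rmax. destruct (Rle_dec 0 (a1 - b2)); destruct (Rle_dec _ (a2 - b1)); lra. }
    exists m, (b1 + b2). split; [lra|]. intros d. rewrite HD. split.
    + intros (d1&d2&F1&F2&e1&e2&e3). apply H1 in F1. apply H2 in F2. lra.
    + intros [k1 k2].
      destruct (Rle_dec (a1 + a2) d).
      * destruct (Rle_dec b1 (d - a2)).
        -- exists b1, (d - b1). rewrite H1, H2. lra.
        -- exists (d - a2), a2. rewrite H1, H2. lra.
      * destruct (Rle_dec a1 a2).
        -- destruct (Rle_dec a1 (a2 - d)).
           ++ exists (a2 - d), a2. rewrite H1, H2. lra.
           ++ exists a1, a2. rewrite H1, H2. lra.
        -- destruct (Rle_dec a2 (a1 - d)).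
           ++ exists a1, (a1 - d). rewrite H1, H2. lra.
           ++ exists a1, a2. rewrite H1, H2. lra.
Qed.

Lemma good_all T : forall l, (forall i, (i < length (edges T))%nat -> 0 <= l i) ->
  Good (dist_set T l).
Proof.
  induction T as [|T1 IH1 T2 IH2|T1 IH1 T2 IH2]; intros l hl.
  - right. assert (h0 : 0 <= l 0%nat) by (apply hl; simpl; lia).
    exists (l 0%nat), (l 0%nat). split; [lra|]. intros d. rewrite edge_char by auto. lra.
  - assert (Hlen : length (edges (SPSer T1 T2)) = (length (edges T1) + length (edges T2))%nat)
      by (simpl; rewrite length_app, !length_map; reflexivity).
    apply (good_ser _ (dist_set T1 l) (dist_set T2 (shift T1 l))).
    + apply IH1. intros i hi. apply hl. lia.
    + apply IH2. intros i hi. apply hl. lia.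
    + intros d. apply ser_char.
  - assert (Hlen : length (edges (SPPar T1 T2)) = (length (edges T1) + length (edges T2))%nat)
      by (simpl; rewrite length_app, !length_map; reflexivity).
    apply (good_par _ (dist_set T1 l) (dist_set T2 (shift T1 l))).
    + apply IH1. intros i hi. apply hl. lia.
    + apply IH2. intros i hi. apply hl. lia.
    + intros d. apply par_char.
Qed.

Theorem mainTheorem4 (T : sp) (l : nat -> R)
  (hl : forall i, (i < length (edges T))%nat -> 0 <= l i) :
  (forall d, ~ dist_set T l d) \/
  (exists a b, a <= b /\ forall d, dist_set T l d <-> a <= d <= b).
Proof.
  destruct (good_all T l hl) as [E|(a&b&h&H)]; [left; exact E|right].
  exists a, b. split; [lra|exact H].
Qed.
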